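(* Let $R$ be a QNA and, for $k\in[0,N]$, let $Q_k$ be the subgroup of $Q=X(\mathcal H)$ generated by $\underline{\beta_1},\ldots,\underline{\beta_k}$, where $\underline{\beta_i}=\operatorname{wt}(x_i)$. For $k\in[1,N]$: (a) if $\delta_k\neq0$ then $Q_k=Q_{k-1}$; (b) if $\delta_k=0$ then $Q_k=Q_{k-1}\oplus\mathbb Z\underline{\beta_k}$.
   Context: ${\mathbb K}$ is a field of characteristic $0$. A quantum nilpotent algebra (QNA) is an iterated Ore extension $R={\mathbb K}[x_1][x_2;\sigma_2,\delta_2]\cdots[x_N;\sigma_N,\delta_N]$, where $R_k={\mathbb K}[x_1][x_2;\sigma_2,\delta_2]\cdots[x_k;\sigma_k,\delta_k]$ ($R_0={\mathbb K}$), $\sigma_k$ is a ${\mathbb K}$-automorphism and $\delta_k$ a $\sigma_k$-derivation of $R_{k-1}$, together with a torus $\mathcal H$ acting rationally by ${\mathbb K}$-automorphisms on $R$ with each $x_i$ an $\mathcal H$-eigenvector, such that: (i) $\sigma_k(x_j)=\lambda_{kj}x_j$ for $j<k$, with $\lambda_{kj}\in{\mathbb K}^*$; (ii) $\delta_k$ is locally nilpotent on $R_{k-1}$; (iii) for each $k$ there exist $h_k\in\mathcal H$ and $q_k\in{\mathbb K}^*$ not a root of unity such that $h_k$ acts on $R_{k-1}$ as $\sigma_k$ and $h_k\cdot x_k=q_kx_k$. The rank is $n=|\{k:\delta_k=0\}|$, and $\mathcal H=({\mathbb K}^* )^n$ is taken to be this maximal torus. Its character group $Q=X(\mathcal H)\cong\mathbb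 Z^n$ grades $R$; homogeneous elements are the $\mathcal H$-eigenvectors, and for homogeneous $a$, $\operatorname{wt}(a)=(\alpha_1,\ldots,\alpha_n)\in\mathbb Z^n$ is defined by $(h_1,\ldots,h_n)\cdot a=h_1^{\alpha_1}\cdots h_n^{\alpha_n}a$. *)

(* Defs.v *)
From HB Require Import structures.
From mathcomp Require Import all_boot all_order all_algebra.
Set Implicit Arguments. Unset Strict Implicit. Unset Printing Implicit Defensive.
Import Order.TTheory GRing.Theory Num.Theory.
Local Open Scope ring_scope.

Notation torus_elt K n := {ffun 'I_n -> K}.
Notation wtT n := {ffun 'I_n -> int}.

Section QNA.
Variables (K : fieldType) (R : algType K) (N n : nat).

(* Elements of the torus H = (K^* )^n are represented by functions 'I_n -> K
   with nonzero entries; characters (elements of Q = X(H) = Z^n) by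
   functions 'I_n -> int. *)
Local Notation torus_elt := {ffun 'I_n -> K}.
Local Notation wtT := {ffun 'I_n -> int}.

Definition in_torus (h : torus_elt) : Prop := forall j, h j != 0.
Definition torus_one : torus_elt := [ffun => 1].
Definition torus_mul (h h' : torus_elt) : torus_elt := [ffun j => h j * h' j].

Definition chi (a : wtT) (h : torus_elt) : K := \prod_(j < n) (h j) ^ (a j).

Variable act : torus_elt -> R -> R.

Definition is_weight (a : R) (alpha : wtT) : Prop :=
  forall h, in_torus h -> act h a = chi alpha h *: a.

(* Variables x_1..x_N are indexed by 'I_N, 0-based: x k is the paper's x_{k+1}. *)
Variable x : 'I_N -> R.

(* gen k r : r lies in R_k, the subalgebra generated by the x i with i < k
   (i.e. the paper's x_1, ..., x_k); gen 0 = K.1 *)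
Definition gen (k : nat) (r : R) : Prop :=
  exists s : seq (K * seq 'I_N),
    (forall p, p \in s -> forall i, i \in p.2 -> (i < k)%N) /\
    r = \sum_(p <- s) p.1 *: \prod_(i <- p.2) x i.

Variables (sigma delta : 'I_N -> R -> R).

(* sigma k is a K-algebra automorphism of R_{k} (paper: of R_{k-1}) *)
Definition is_aut_on (k : nat) (s : R -> R) : Prop :=
  (forall a, gen k a -> gen k (s a)) /\
  (forall b, gen k b -> exists2 a, gen k a & s a = b) /\
  (forall a b, gen k a -> gen k b -> s a = s b -> a = b) /\
  (forall c a b, gen k a -> gen k b -> s (c *: a + b) = c *: s a + s b) /\
  (forall a b, gen k a -> gen k b -> s (a * b) = s a * s b) /\
  s 1 = 1.

Definition is_sder_on (k : nat) (s d : R -> R) : Prop :=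
  (forall a, gen k a -> gen k (d a)) /\
  (forall c a b, gen k a -> gen k b -> d (c *: a + b) = c *: d a + d b) /\
  (forall a b, gen k a -> gen k b -> d (a * b) = s a * d b + d a * b).

Definition delta_zero (k : 'I_N) : Prop := forall r, gen k r -> delta k r = 0.

(* R = K[x_1][x_2;sigma_2,delta_2]...[x_N;sigma_N,delta_N], described internally:
   R = R_N; R_k is generated by R_{k-1} and x_k, it is a free left R_{k-1}-module
   on the powers of x_k, and x_k r = sigma_k(r) x_k + delta_k(r) for r in R_{k-1},
   with sigma_k a K-automorphism and delta_k a sigma_k-derivation of R_{k-1}. *)
Definition iterated_Ore : Prop :=
  (forall r, gen N r) /\
  (forall k : 'I_N, is_aut_on k (sigma k)) /\
  (forall k : 'I_N, is_sder_on k (sigma k) (delta k)) /\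
  (forall (k : 'I_N) r, gen k r -> x k * r = sigma k r * x k + delta k r) /\
  (forall (k : 'I_N) (c : seq R), (forall r, r \in c -> gen k r) ->
      \sum_(i < size c) c`_i * x k ^+ i = 0 -> forall i, c`_i = 0).

(* rational action of the torus H = (K^* )^n by K-algebra automorphisms;
   faithful (H is a (maximal) torus of automorphisms of R). *)
Definition rational_torus_action : Prop :=
  (forall h, in_torus h -> forall c a b, act h (c *: a + b) = c *: act h a + act h b) /\
  (forall h, in_torus h -> forall a b, act h (a * b) = act h a * act h b) /\
  (forall h, in_torus h -> act h 1 = 1) /\
  (forall a, act torus_one a = a) /\
  (forall h h', in_torus h -> in_torus h' ->
      forall a, act (torus_mul h h') a = act h (act h' a)) /\
  (forall r, exists s : seq (R * wtT),
      (forall p, p \in s -> is_weight p.1 p.2) /\ r = \sum_(p <- s) p.1) /\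
  (forall h, in_torus h -> (forall a, act h a = a) -> h = torus_one).

Definition is_QNA : Prop :=
  iterated_Ore /\
  rational_torus_action /\
  (forall i, exists alpha, is_weight (x i) alpha) /\
  (forall k j : 'I_N, (j < k)%N -> exists2 l : K, l != 0 & sigma k (x j) = l *: x j) /\
  (forall (k : 'I_N) r, gen k r -> exists m, iter m (delta k) r = 0) /\
  (forall k : 'I_N, exists2 h, in_torus h &
      exists q : K, q != 0 /\ (forall m, q ^+ m.+1 != 1) /\
        (forall r, gen k r -> act h r = sigma k r) /\ act h (x k) = q *: x k) /\
  (* n = rank = #{k | delta_k = 0} *)
  (exists f : 'I_n -> 'I_N, injective f /\
      forall k, delta_zero k <-> exists j, f j = k).

Definition inQ (beta : 'I_N -> wtT) (k : nat) (v : wtT) : Prop :=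
  exists c : 'I_N -> int, v = \sum_(i < N | (i < k)%N) beta i *~ c i.

End QNA.

(* Main.v *)
Require Import Defs.
From HB Require Import structures.
From mathcomp Require Import all_boot all_order all_algebra.
From mathcomp Require Import zify.
From Stdlib Require Import Classical.
Import Order.TTheory GRing.Theory Num.Theory.
Set Implicit Arguments. Unset Strict Implicit. Unset Printing Implicit Defensive.
Local Open Scope ring_scope.
Definition zspan (M : zmodType) (m : nat) (P : pred 'I_m) (b : 'I_m -> M) (v : M) :=
  exists c : 'I_m -> int, v = \sum_(i < m | P i) b i *~ c i.

Lemma zspan0 (M : zmodType) m (P : pred 'I_m) (b : 'I_m -> M) : zspan P b 0.
Proof. by exists (fun _ => 0); rewrite big1 // => i _; rewrite mulr0z. Qed.

Lemma zspanD (M : zmodType) m (P : pred 'I_m) (b : 'I_m -> M) u v : zspan P b u -> zspan P b v -> zspan P b (u + v).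
Proof.
move=> [c ->] [d ->]; exists (fun i => c i + d i).
by rewrite -big_split; apply: eq_bigr => i _; rewrite mulrzDr.
Qed.

Lemma zspanZ (M : zmodType) m (P : pred 'I_m) (b : 'I_m -> M) u z : zspan P b u -> zspan P b (u *~ z).
Proof.
move=> [c ->]; exists (fun i => c i * z).
by rewrite mulrz_suml; apply: eq_bigr => i _; rewrite mulrzA.
Qed.

Lemma zspan_gen (M : zmodType) m (P : pred 'I_m) (b : 'I_m -> M) i : P i -> zspan P b (b i).
Proof.
move=> Pi; exists (fun j => (j == i)%:Z).
rewrite (bigD1 i) //= eqxx mulr1z big1 ?addr0 // => j /andP[_ /negbTE ->].
by rewrite mulr0z.
Qed.

Lemma zspan_mono (M : zmodType) m (P P' : pred 'I_m) (b : 'I_m -> M) v :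
  (forall i, P i -> P' i) -> zspan P b v -> zspan P' b v.
Proof.
move=> PP [c ->]; exists (fun i => if P i then c i else 0).
rewrite big_mkcond [RHS]big_mkcond; apply: eq_bigr => i _.
by case: (boolP (P i)) => Pi; [rewrite (PP _ Pi) | case: (P' i); rewrite ?mulr0z].
Qed.

Lemma zspan_sum (M : zmodType) m (P : pred 'I_m) (b : 'I_m -> M) (I : eqType) (s : seq I) (F : I -> M) :
  (forall x, x \in s -> zspan P b (F x)) -> zspan P b (\sum_(x <- s) F x).
Proof.
elim: s => [|y s IH] H; first by rewrite big_nil; apply: zspan0.
rewrite big_cons; apply: zspanD; first by apply: H; rewrite mem_head.
by apply: IH => x xs; apply: H; rewrite inE xs orbT.
Qed.

Lemma zspan_form (M : zmodType) m (P : pred 'I_m) (b : 'I_m -> M) (L : M -> int) v :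
  L 0 = 0 -> (forall x y, L (x + y) = L x + L y) -> (forall x z, L (x *~ z) = L x * z) ->
  (forall i, P i -> L (b i) = 0) -> zspan P b v -> L v = 0.
Proof.
move=> L0 LD LZ H [c ->]; elim/big_rec: _ => [//|i y Pi IH].
by rewrite LD LZ H // mul0r add0r.
Qed.

Lemma lin_dep n (b : 'I_n -> {ffun 'I_n -> int}) (w : 'I_n -> int) j0 :
  w j0 != 0 -> \sum_j b j *~ w j = 0 ->
  exists2 u : 'I_n -> int, (exists l, u l != 0) & forall j, \sum_l b j l * u l = 0.
Proof.
move=> wj0 Hw.
pose Bq : 'M[rat]_n := \matrix_(j, l) (b j l)%:~R.
pose wq : 'rV[rat]_n := \row_j (w j)%:~R.
have wB : wq *m Bq = 0.
  apply/rowP => l; rewrite !mxE.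
  transitivity (((\sum_j b j *~ w j) l)%:~R : rat); last by rewrite Hw ffunE.
  rewrite sum_ffunE rmorph_sum /=.
  by apply: eq_bigr => j _; rewrite !mxE ffunMzE -intrM mulrzz mulrC.
have wq0 : wq != 0.
  by apply/eqP => /rowP /(_ j0) /eqP; rewrite !mxE intr_eq0 (negbTE wj0).
have dB : \det Bq^T == 0 by rewrite det_tr; apply/det0P; exists wq.
case/det0P: dB => v v0 vB.
have [l0 vl0] : exists l, v 0 l != 0.
  apply/existsP; apply: contraR v0 => /existsPn H; apply/eqP/rowP => l.
  by rewrite mxE; apply/eqP; move: (H l); rewrite negbK.
pose d := \prod_l denq (v 0 l).
have d0 : d != 0 by apply/prodf_neq0 => l _; apply: denq_neq0.
have uE l : ((numq (v 0 l) * \prod_(l' | l' != l) denq (v 0 l'))%:~R : rat) = v 0 l * d%:~R.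
  by rewrite intrM numqE /d [X in _ = _ * X%:~R](bigD1 l) //= intrM mulrA.
exists (fun l => numq (v 0 l) * \prod_(l' | l' != l) denq (v 0 l')).
  exists l0; rewrite -(intr_eq0 rat) uE mulf_neq0 // intr_eq0 //.
move=> j; apply/eqP; rewrite -(intr_eq0 rat) rmorph_sum /=.
have := congr1 (fun r : 'rV_n => r 0 j) vB; rewrite !mxE => vBj.
rewrite (eq_bigr (fun l => v 0 l * (Bq^T l j) * d%:~R)); last first.
  by move=> l _; rewrite intrM uE !mxE mulrA [_%:~R * v 0 l]mulrC.
by rewrite -mulr_suml vBj mul0r.
Qed.

Lemma two_ne0 (K : fieldType) : [pchar K] =i pred0 -> (2 : K) != 0.
Proof. by move/pcharf0P => H; rewrite (H 2%N). Qed.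

Lemma two_expn_eq1 (K : fieldType) (m : nat) : [pchar K] =i pred0 -> (2 : K) ^+ m = 1 -> m = 0%N.
Proof.
move/pcharf0P => H E.
have : ((2 ^ m - 1)%N%:R : K) == 0 by rewrite natrB ?expn_gt0 // natrX E subrr.
rewrite H subn_eq0; case: m {E} => // m; rewrite expnS.
move: (expn_gt0 2 m); move: (2 ^ m)%N => p; lia.
Qed.

Lemma two_powz_eq1 (K : fieldType) (z : int) : [pchar K] =i pred0 -> (2 : K) ^ z = 1 -> z = 0.
Proof.
move=> c0; case: z => m E; first by rewrite (two_expn_eq1 c0 E).
have : (2 : K) ^+ m.+1 = 1.
  by move: E; rewrite NegzE -exprnN => /eqP; rewrite invr_eq1 => /eqP.
by move/(two_expn_eq1 c0).
Qed.

Lemma chiD (K : fieldType) n (a b : wtT n) (h : torus_elt K n) :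
  in_torus h -> chi (a + b) h = chi a h * chi b h.
Proof.
move=> th; rewrite /chi -big_split /=; apply: eq_bigr => j _.
by rewrite ffunE expfzDr.
Qed.

Lemma chi0 (K : fieldType) n (h : torus_elt K n) : chi 0 h = 1.
Proof. by rewrite /chi big1 // => j _; rewrite ffunE expr0z. Qed.

Lemma chi_sep (K : fieldType) n (a b : wtT n) : [pchar K] =i pred0 -> a != b ->
  exists2 h : torus_elt K n, in_torus h & chi a h != chi b h.
Proof.
move=> c0 ab.
have [j abj] : exists j, a j != b j.
  apply/existsP; apply: contraR ab => /existsPn H; apply/eqP/ffunP => j.
  by move: (H j); rewrite negbK => /eqP.
exists [ffun i => if i == j then 2 else 1].
  by move=> i; rewrite ffunE; case: (i == j); rewrite ?two_ne0 ?oner_neq0.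
have chiE (c : wtT n) : chi c [ffun i => if i == j then 2 else 1] = (2 : K) ^ c j.
  rewrite /chi (bigD1 j) //= ffunE eqxx big1 ?mulr1 // => i /negbTE ij.
  by rewrite ffunE ij exp1rz.
rewrite !chiE; apply: contra abj => /eqP E; apply/eqP.
have t0 := two_ne0 c0.
have : (2 : K) ^ (a j - b j) = 1.
  by rewrite expfzDr // E -invr_expz divff // expfz_neq0.
by move/(two_powz_eq1 c0)/eqP; rewrite subr_eq0 => /eqP.
Qed.

Lemma actDZ (K : fieldType) (R : algType K) n (act : torus_elt K n -> R -> R) h :
  rational_torus_action act -> in_torus h -> forall c a b, act h (c *: a + b) = c *: act h a + act h b.
Proof. by case=> H _ th; apply: H. Qed.

Lemma act0 (K : fieldType) (R : algType K) n (act : torus_elt K n -> R -> R) h :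
  rational_torus_action act -> in_torus h -> act h 0 = 0.
Proof.
move=> H th; have := actDZ H th 1 0 0; rewrite scale1r addr0 => E.
move/(congr1 (fun y => y - act h 0)): E; by rewrite subrr addrK scale1r.
Qed.

Lemma actZ (K : fieldType) (R : algType K) n (act : torus_elt K n -> R -> R) h :
  rational_torus_action act -> in_torus h -> forall c a, act h (c *: a) = c *: act h a.
Proof. by move=> H th c a; have := actDZ H th c a 0; rewrite (act0 H th) !addr0. Qed.

Lemma actD (K : fieldType) (R : algType K) n (act : torus_elt K n -> R -> R) h :
  rational_torus_action act -> in_torus h -> forall a b, act h (a + b) = act h a + act h b.
Proof. by move=> H th a b; have := actDZ H th 1 a b; rewrite !scale1r. Qed.

Lemma act_sum (K : fieldType) (R : algType K) n (act : torus_elt K n -> R -> R) h (I : Type) (s : seq I) (F : I -> R) :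
  rational_torus_action act -> in_torus h -> act h (\sum_(i <- s) F i) = \sum_(i <- s) act h (F i).
Proof.
move=> H th; elim: s => [|i s IH]; first by rewrite !big_nil act0.
by rewrite !big_cons actD // IH.
Qed.

Lemma actM (K : fieldType) (R : algType K) n (act : torus_elt K n -> R -> R) h :
  rational_torus_action act -> in_torus h -> forall a b, act h (a * b) = act h a * act h b.
Proof. by case=> _ [H _] th; apply: H. Qed.

Lemma act1 (K : fieldType) (R : algType K) n (act : torus_elt K n -> R -> R) h :
  rational_torus_action act -> in_torus h -> act h 1 = 1.
Proof. by case=> _ [_ [H _]] th; apply: H. Qed.

Lemma wDZ (K : fieldType) (R : algType K) n (act : torus_elt K n -> R -> R) a b c mu :
  rational_torus_action act -> is_weight act a mu -> is_weight act b mu ->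
  is_weight act (c *: a + b) mu.
Proof.
by move=> H wa wb h th; rewrite actDZ // wa // wb // scalerDr !scalerA mulrC.
Qed.

Lemma wZ (K : fieldType) (R : algType K) n (act : torus_elt K n -> R -> R) a c mu :
  rational_torus_action act -> is_weight act a mu -> is_weight act (c *: a) mu.
Proof.
by move=> H wa h th; rewrite actZ // wa // !scalerA mulrC.
Qed.

Lemma wM (K : fieldType) (R : algType K) n (act : torus_elt K n -> R -> R) a b al be :
  rational_torus_action act -> is_weight act a al -> is_weight act b be ->
  is_weight act (a * b) (al + be).
Proof.
move=> H wa wb h th; rewrite actM // wa // wb // chiD //.
by rewrite -scalerAl -scalerAr scalerA.
Qed.

Lemma w1 (K : fieldType) (R : algType K) n (act : torus_elt K n -> R -> R) :
  rational_torus_action act -> is_weight act 1 0.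
Proof. by move=> H h th; rewrite act1 // chi0 scale1r. Qed.

Lemma w_prod (K : fieldType) (R : algType K) N n (act : torus_elt K n -> R -> R)
   (x : 'I_N -> R) (beta : 'I_N -> wtT n) (l : seq 'I_N) :
  rational_torus_action act -> (forall i, is_weight act (x i) (beta i)) ->
  is_weight act (\prod_(i <- l) x i) (\sum_(i <- l) beta i).
Proof.
move=> H wx; elim: l => [|i l IH]; first by rewrite !big_nil; apply: w1.
by rewrite !big_cons; apply: wM.
Qed.

Lemma w_indep_aux (K : fieldType) (R : algType K) n (act : torus_elt K n -> R -> R) m :
  [pchar K] =i pred0 -> rational_torus_action act ->
  forall (s : seq (R * wtT n)) (g : wtT n) (d : R), size s = m ->
  (forall p, p \in s -> is_weight act p.1 p.2) -> (forall p, p \in s -> p.2 != g) ->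
  is_weight act d g -> d = \sum_(p <- s) p.1 -> d = 0.
Proof.
move=> c0 H; elim: m => [|m IH] [|[a0 m0] s] //= g d sz ws ng wd dE.
  by rewrite dE big_nil.
have [h th hne] := chi_sep c0 (ng _ (mem_head _ _)).
pose s' := [seq ((chi p.2 h - chi m0 h) *: p.1, p.2) | p <- s].
have : (chi g h - chi m0 h) *: d = 0.
  apply: (IH s' g); first by rewrite size_map; case: sz.
  - move=> p /mapP [q qs ->] /=; apply: wZ => //; apply: ws.
    by rewrite inE qs orbT.
  - by move=> p /mapP [q qs ->] /=; apply: ng; rewrite inE qs orbT.
  - exact: wZ.
  - rewrite big_map scalerBl -wd // dE act_sum // !big_cons /=.
    rewrite (ws _ (mem_head _ _)) //= scalerDr opprD addrACA subrr add0r.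
    rewrite scaler_sumr -sumrB; apply: eq_big_seq => p ps; rewrite scalerBl ws //.
    by rewrite inE ps orbT.
move/eqP; rewrite scaler_eq0 subr_eq0 eq_sym (negbTE hne) /=.
by move/eqP.
Qed.

Lemma w_indep (K : fieldType) (R : algType K) n (act : torus_elt K n -> R -> R)
  (s : seq (R * wtT n)) (g : wtT n) (d : R) :
  [pchar K] =i pred0 -> rational_torus_action act ->
  (forall p, p \in s -> is_weight act p.1 p.2) -> (forall p, p \in s -> p.2 != g) ->
  is_weight act d g -> d = \sum_(p <- s) p.1 -> d = 0.
Proof. by move=> c0 H; apply: (@w_indep_aux _ _ _ act (size s) c0 H s g d (erefl _)). Qed.

Lemma inQ_span N n (beta : 'I_N -> wtT n) k v :
  inQ beta k v <-> zspan (fun i : 'I_N => (i < k)%N) beta v.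
Proof. by []. Qed.

Lemma weight_in_Q (K : fieldType) (R : algType K) N n (act : torus_elt K n -> R -> R)
   (x : 'I_N -> R) (beta : 'I_N -> wtT n) k d g :
  [pchar K] =i pred0 -> rational_torus_action act -> (forall i, is_weight act (x i) (beta i)) ->
  gen x k d -> d != 0 -> is_weight act d g -> inQ beta k g.
Proof.
move=> c0 H wx [s [sk dE]] d0 wd; apply/inQ_span.
pose s' := [seq (p.1 *: \prod_(i <- p.2) x i, \sum_(i <- p.2) beta i) | p <- s].
case: (boolP (has (fun q => q.2 == g) s')).
  case/hasP => q /mapP [p ps ->] /= /eqP <-.
  apply: zspan_sum => i ip; apply: zspan_gen; exact: (sk p ps i ip).
move/hasPn => ng; exfalso; move/eqP: d0; apply.
apply: (w_indep (s := s') c0 H _ _ wd).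
- by move=> q /mapP [p ps ->] /=; apply: wZ => //; apply: w_prod.
- by move=> q qs; apply: ng.
- by rewrite dE big_map.
Qed.

Lemma gen_DZ (K : fieldType) (R : algType K) N (x : 'I_N -> R) k c a b :
  gen x k a -> gen x k b -> gen x k (c *: a + b).
Proof.
move=> [s [sk ->]] [t [tk ->]].
exists ([seq (c * p.1, p.2) | p <- s] ++ t); split.
  move=> p; rewrite mem_cat => /orP [/mapP [q qs ->]|pt] /=; first exact: sk.
  exact: tk.
by rewrite big_cat big_map scaler_sumr; congr (_ + _); apply: eq_bigr => p _; rewrite scalerA.
Qed.

Lemma gen_mono (K : fieldType) (R : algType K) N (x : 'I_N -> R) k (l : seq 'I_N) :
  (forall i, i \in l -> (i < k)%N) -> gen x k (\prod_(i <- l) x i).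
Proof.
move=> lk; exists [:: (1, l)]; split; last by rewrite big_cons big_nil scale1r addr0.
by move=> p; rewrite inE => /eqP -> /=.
Qed.

Lemma gen0 (K : fieldType) (R : algType K) N (x : 'I_N -> R) k : gen x k 0.
Proof. by exists [::]; split => //; rewrite big_nil. Qed.

Lemma gen_x (K : fieldType) (R : algType K) N (x : 'I_N -> R) k (i : 'I_N) :
  (i < k)%N -> gen x k (x i).
Proof.
move=> ik; have := gen_mono x (l := [:: i]) (k := k).
by rewrite big_cons big_nil mulr1; apply => j; rewrite inE => /eqP ->.
Qed.

Lemma sder_vanish (K : fieldType) (R : algType K) N (x : 'I_N -> R) k (s d : R -> R) :
  is_sder_on x k s d -> s 1 = 1 -> (forall j : 'I_N, (j < k)%N -> d (x j) = 0) ->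
  forall r, gen x k r -> d r = 0.
Proof.
move=> [dgen [dlin dmul]] s1 dx r [t [tk ->]].
have d0 : d 0 = 0.
  have := dlin 1 0 0 (gen0 _ _) (gen0 _ _); rewrite scale1r addr0 => E.
  by move/(congr1 (fun y => y - d 0)): E; rewrite subrr addrK scale1r.
have dmono (l : seq 'I_N) : (forall i, i \in l -> (i < k)%N) -> d (\prod_(i <- l) x i) = 0.
  elim: l => [|i l IH] lk.
    have g1 : gen x k 1 by have := gen_mono x (k := k) (l := [::]); rewrite big_nil; apply.
    rewrite big_nil; have := dmul 1 1 g1 g1; rewrite s1 mul1r mulr1.
    by move/(congr1 (fun y => y - d 1)); rewrite subrr addrK mul1r.
  rewrite big_cons dmul; first by rewrite IH ?dx ?mulr0 ?mul0r ?addr0 // => [|j jl];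
    [apply: lk; rewrite mem_head | apply: lk; rewrite inE jl orbT].
  - by apply: gen_x; apply: lk; rewrite mem_head.
  - by apply: gen_mono => j jl; apply: lk; rewrite inE jl orbT.
elim: t tk => [|p t IH] tk; first by rewrite big_nil.
rewrite big_cons dlin.
- rewrite dmono ?scaler0 ?add0r; first by apply: IH => q qt; apply: tk; rewrite inE qt orbT.
  by apply: tk; rewrite mem_head.
- by apply: gen_mono; apply: tk; rewrite mem_head.
- by exists t; split => // q qt; apply: tk; rewrite inE qt orbT.
Qed.

Lemma part_a (K : fieldType) (R : algType K) (N n : nat)
    (act : torus_elt K n -> R -> R) (x : 'I_N -> R)
    (sigma delta : 'I_N -> R -> R) (beta : 'I_N -> wtT n) (k : 'I_N) :
  [pchar K] =i pred0 ->
  is_QNA act x sigma delta ->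
  (forall i, is_weight act (x i) (beta i)) ->
  ~ delta_zero x delta k -> inQ beta k (beta k).
Proof.
move=> c0 [[genN [aut [sder [comm free]]]] [H [_ [lam _]]]] wx ndz.
have [j jk dj] : exists2 j : 'I_N, (j < k)%N & delta k (x j) != 0.
  case: (boolP [exists j : 'I_N, (j < k)%N && (delta k (x j) != 0)]).
    by case/existsP => j /andP [jk dj]; exists j.
  move/existsPn => nj; exfalso; apply: ndz => r gr.
  apply: (sder_vanish (sder k) _ _ gr).
    by case: (aut k) => _ [_ [_ [_ [_ ->]]]].
  by move=> i ik; move: (nj i); rewrite ik /= negbK => /eqP.
have [l l0 sl] := lam k j jk.
have dE : delta k (x j) = (- l) *: (x j * x k) + x k * x j.
  by rewrite (comm k (x j) (gen_x x jk)) sl -scalerAl scaleNr addKr.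
have wd : is_weight act (delta k (x j)) (beta k + beta j).
  rewrite dE; apply: wDZ => //; last exact: wM.
  by rewrite addrC; apply: wM.
have gd : gen x k (delta k (x j)) by case: (sder k) => G _; apply: G; apply: gen_x.
have Q1 := weight_in_Q c0 H wx gd dj wd.
have -> : beta k = (beta k + beta j) + beta j *~ -1 by rewrite mulrN1z addrK.
apply: zspanD => //; apply: zspanZ; exact: zspan_gen.
Qed.

Lemma inQ_split N n (beta : 'I_N -> wtT n) (k : 'I_N) v :
  inQ beta k.+1 v <-> exists u (m : int), inQ beta k u /\ v = u + beta k *~ m.
Proof.
split.
  move=> [c ->]; exists (\sum_(i < N | (i < k)%N) beta i *~ c i), (c k); split.
    by exists c.
  rewrite (bigD1 k) /= ?ltnSn // addrC; congr (_ + _); apply: eq_bigl => i.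
  by rewrite ltnS -val_eqE /= [RHS]ltn_neqAle andbC.
move=> [u [m [uQ ->]]]; apply: zspanD.
  by apply: zspan_mono uQ => i /= /ltnW.
by apply: zspanZ; apply: zspan_gen => /=.
Qed.

Lemma toQ' (K : fieldType) (R : algType K) (N n : nat)
    (act : torus_elt K n -> R -> R) (x : 'I_N -> R)
    (sigma delta : 'I_N -> R -> R) (beta : 'I_N -> wtT n) (f : 'I_n -> 'I_N) :
  [pchar K] =i pred0 ->
  is_QNA act x sigma delta ->
  (forall i, is_weight act (x i) (beta i)) ->
  (forall k, delta_zero x delta k <-> exists j, f j = k) ->
  forall t v, inQ beta t v -> zspan (fun j => (f j < t)%N) (fun j => beta (f j)) v.
Proof.
move=> c0 Q wx fdz; elim=> [|t IH] v.
  by move=> [c ->]; rewrite big_pred0 //; apply: zspan0.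
have mono w : zspan (fun j => (f j < t)%N) (fun j => beta (f j)) w ->
              zspan (fun j => (f j < t.+1)%N) (fun j => beta (f j)) w.
  by apply: zspan_mono => j /= /ltnW.
case: (ltnP t N) => [tN | Nt].
  pose T := Ordinal tN.
  move=> vQ; have : inQ beta T.+1 v by [].
  case/inQ_split => u [m [uQ ->]]; apply: zspanD; first by apply: mono; apply: IH.
  apply: zspanZ; case: (classic (delta_zero x delta T)) => [dz|ndz].
    by case/fdz: dz => j fj; have := zspan_gen (fun j => beta (f j)) (P := fun j => (f j < t.+1)%N) (i := j); rewrite fj; apply => /=.
  by apply: mono; apply: IH; apply: (part_a c0 Q wx ndz).
move=> vQ; apply: mono; apply: IH; move: vQ; apply: zspan_mono => i /= _.
exact: leq_trans (ltn_ord i) Nt.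
Qed.

Lemma prod_expz (K : fieldType) (a : K) (I : Type) (s : seq I) (z : I -> int) :
  a != 0 -> \prod_(i <- s) a ^ z i = a ^ (\sum_(i <- s) z i).
Proof.
move=> a0; elim: s => [|i s IH]; first by rewrite !big_nil expr0z.
by rewrite !big_cons IH expfzDr.
Qed.

Lemma act_fix_all (K : fieldType) (R : algType K) (N n : nat)
    (act : torus_elt K n -> R -> R) (x : 'I_N -> R) h :
  rational_torus_action act -> in_torus h -> (forall r, gen x N r) ->
  (forall i, act h (x i) = x i) -> forall r, act h r = r.
Proof.
move=> H th genN hx r; case: (genN r) => s [_ ->].
rewrite act_sum //; apply: eq_bigr => p _; rewrite actZ //; congr (_ *: _).
elim: p.2 => [|i l IH]; first by rewrite !big_nil act1.
by rewrite !big_cons actM // hx IH.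
Qed.

Lemma part_b2 (K : fieldType) (R : algType K) (N n : nat)
    (act : torus_elt K n -> R -> R) (x : 'I_N -> R)
    (sigma delta : 'I_N -> R -> R) (beta : 'I_N -> wtT n) (k : 'I_N) :
  [pchar K] =i pred0 ->
  is_QNA act x sigma delta ->
  (forall i, is_weight act (x i) (beta i)) ->
  delta_zero x delta k ->
  forall m : int, inQ beta k (beta k *~ m) -> beta k *~ m = 0.
Proof.
move=> c0 Q wx dz m mQ.
have Q0 := Q; case: Q0 => [[genN _] [H [_ [_ [_ [_ [f [finj fdz]]]]]]]].
case: (eqVneq m 0) => [-> | m0]; first by rewrite mulr0z.
exfalso.
case/fdz: dz => j0 fj0.
have [c cE] := toQ' c0 Q wx fdz mQ.
pose w j := (if j == j0 then m else 0) - (if (f j < k)%N then c j else 0).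
have wj0 : w j0 != 0 by rewrite /w eqxx fj0 ltnn subr0.
have wsum : \sum_j beta (f j) *~ w j = 0.
  rewrite (eq_bigr (fun j => beta (f j) *~ (if j == j0 then m else 0) -
                           beta (f j) *~ (if (f j < k)%N then c j else 0))); last first.
    by move=> j _; rewrite /w mulrzBr.
  rewrite sumrB (bigD1 j0) //= eqxx big1 ?addr0; last first.
    by move=> j /negbTE ->; rewrite mulr0z.
  rewrite fj0 cE big_mkcond /=; apply/eqP; rewrite subr_eq0; apply/eqP; apply: eq_bigr => j _.
  by case: ifP; rewrite ?mulr0z.
have [u [l ul0] uz] := lin_dep wj0 wsum.
pose L (v : wtT n) := \sum_l v l * u l.
have L0 : L 0 = 0 by rewrite /L big1 // => i _; rewrite ffunE mul0r.
have LD a b : L (a + b) = L a + L b.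
  by rewrite /L -big_split; apply: eq_bigr => i _; rewrite ffunE mulrDl.
have LZ a z : L (a *~ z) = L a * z.
  by rewrite /L mulr_suml; apply: eq_bigr => i _; rewrite ffunMzE mulrzz mulrAC.
have Lb i : L (beta i) = 0.
  have : inQ beta N (beta i) by apply: zspan_gen.
  move/(toQ' c0 Q wx fdz); apply: zspan_form => // j _; exact: uz.
have t0 := two_ne0 c0.
pose h : torus_elt K n := [ffun l => (2 : K) ^ u l].
have th : in_torus h by move=> i; rewrite ffunE expfz_neq0.
have hx i : act h (x i) = x i.
  rewrite wx // /chi (eq_bigr (fun l => (2 : K) ^ (u l * beta i l))); last first.
    by move=> l' _; rewrite ffunE exprz_exp.
  rewrite prod_expz // (eq_bigr (fun l => beta i l * u l)) ?[X in _ ^ X]Lb ?expr0z ?scale1r //.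
  by move=> l' _; rewrite mulrC.
have := act_fix_all H th genN hx.
case: H => _ [_ [_ [_ [_ [_ faith]]]]] /(faith h th) /ffunP /(_ l).
rewrite !ffunE => /(two_powz_eq1 c0) /eqP.
by rewrite (negbTE ul0).
Qed.

Unset Implicit Arguments. Set Strict Implicit.

Theorem lemma5p5 (K : fieldType) (R : algType K) (N n : nat)
    (act : torus_elt K n -> R -> R) (x : 'I_N -> R)
    (sigma delta : 'I_N -> R -> R) (beta : 'I_N -> wtT n) :
  [pchar K] =i pred0 ->
  is_QNA act x sigma delta ->
  (forall i, is_weight act (x i) (beta i)) ->
  forall k : 'I_N,
    (~ delta_zero x delta k ->
       forall v, inQ beta k.+1 v <-> inQ beta k v) /\
    (delta_zero x delta k ->
       (forall v, inQ beta k.+1 v <->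
          exists u (m : int), inQ beta k u /\ v = u + beta k *~ m) /\
       (forall m : int, inQ beta k (beta k *~ m) -> beta k *~ m = 0)).
Proof.
move=> c0 Q wx k; split.
  move=> ndz v; split.
    case/inQ_split => u [m [uQ ->]]; apply: zspanD => //.
    by apply: zspanZ; apply: (part_a c0 Q wx ndz).
  by apply: zspan_mono => i /= /ltnW.
move=> dz; split; first exact: inQ_split.
exact: (part_b2 c0 Q wx dz).
Qed.
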